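(* Let $v\ge 2$ and $k\ge 2$ be integers with $k$ even. Then there exists an AOA$(1,k-1,k,v)$.
   Context: An orthogonal array OA$(t,k,v)$ (with $1\le t\le k$) is a $v^t\times k$ array with entries from a set $X$ of size $v$ such that, for every choice of $t$ of its columns, each $t$-tuple in $X^t$ appears exactly once as a row of the corresponding $v^t\times t$ subarray. For integers $1\le s\le t\le k$, an augmented orthogonal array AOA$(s,t,k,v)$ is a $v^t\times(k+1)$ array $A$ such that: (1) the first $k$ columns of $A$ form an OA$(t,k,v)$ on a symbol set $X$ of size $v$; (2) the last column of $A$ has entries from a set $Y$ of size $v^{t-s}$; (3) for any choice of $s$ of the first $k$ columns, these $s$ columns together with the last column contain every $(s+1)$-tuple of $X^s\times Y$ exactly once as a row. *)

(* Defs.v *)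
From mathcomp Require Import all_boot all_order.
Set Implicit Arguments. Unset Strict Implicit. Unset Printing Implicit Defensive.

(* An array with N rows and k columns over symbol set X is a function
   A : 'I_N -> 'I_k -> X (A r j = entry in row r, column j).
   A "choice of t of the columns" is an injective map c : 'I_t -> 'I_k. *)

Definition is_OA (X : finType) (t k v : nat) (A : 'I_(v ^ t) -> 'I_k -> X) :=
  [/\ 1 <= t, t <= k, #|X| = v &
    forall c : 'I_t -> 'I_k, injective c ->
    forall x : 'I_t -> X,
      #|[set r : 'I_(v ^ t) | [forall i : 'I_t, A r (c i) == x i]]| = 1].

(* AOA(s,t,k,v): a v^t x (k+1) array, given as its first k columns A and
   its last column L, with entries of the last column from Y, #|Y| = v^(t-s). *)
Definition is_AOA (X Y : finType) (s t k v : nat)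
    (A : 'I_(v ^ t) -> 'I_k -> X) (L : 'I_(v ^ t) -> Y) :=
  [/\ 1 <= s, s <= t, @is_OA X t k v A, #|Y| = v ^ (t - s) &
    forall c : 'I_s -> 'I_k, injective c ->
    forall (x : 'I_s -> X) (y : Y),
      #|[set r : 'I_(v ^ t) | [forall i : 'I_s, A r (c i) == x i] && (L r == y)]| = 1].

Definition AOA_exists (s t k v : nat) :=
  exists (X Y : finType) (A : 'I_(v ^ t) -> 'I_k -> X) (L : 'I_(v ^ t) -> Y),
    @is_AOA X Y s t k v A L.

(* Main.v *)
Require Import Defs.
From mathcomp Require Import all_boot all_order.
From mathcomp Require Import all_algebra ring zify.
Import GRing.Theory.

Lemma card1_inj (T T' : finType) (F : T -> T') (P : pred T) z :
  injective F -> #|T'| <= #|T| -> (forall r, P r = (F r == z)) ->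
  #|[set r | P r]| = 1.
Proof.
move=> Finj le HP.
have /codomP [r0 Hr0] : z \in codom F by apply: inj_card_onto.
suff -> : [set r | P r] = [set r0] by rewrite cards1.
apply/setP => r; rewrite !inE HP Hr0; apply/eqP/eqP => [/Finj|->] //.
Qed.

Lemma aoa_gen (X Y R : finType) s t k v (A : R -> 'I_k -> X) (L : R -> Y) :
  #|R| = v ^ t -> 1 <= s -> s <= t -> t <= k -> #|X| = v -> #|Y| = v ^ (t - s) ->
  (forall c : 'I_t -> 'I_k, injective c -> injective (fun r => [ffun i => A r (c i)])) ->
  (forall c : 'I_s -> 'I_k, injective c ->
     injective (fun r => ([ffun i => A r (c i)], L r))) ->
  AOA_exists s t k v.
Proof.
move=> eR s1 st tk cX cY HOA HAOA.
pose g (r : 'I_(v ^ t)) : R := enum_val (cast_ord (esym eR) r).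
have ginj : injective g by move=> r1 r2 /enum_val_inj /cast_ord_inj.
exists X, Y, (fun r j => A (g r) j), (fun r => L (g r)).
split => //.
- split => //; first by apply: leq_trans st.
  move=> c cinj x.
  apply: (@card1_inj _ _ (fun r => [ffun i => A (g r) (c i)]) _ [ffun i => x i]).
  + by move=> r1 r2 /(HOA c cinj) /ginj.
  + by rewrite card_ffun !card_ord cX.
  + move=> r; apply/forallP/eqP => [H|H].
      by apply/ffunP => i; rewrite !ffunE; apply/eqP/H.
    by move=> i; have := congr1 (fun f : {ffun _ -> X} => f i) H; rewrite !ffunE => ->.
- move=> c cinj x y.
  apply: (@card1_inj _ _ (fun r => ([ffun i => A (g r) (c i)], L (g r))) _
           ([ffun i => x i], y)).
  + by move=> r1 r2 /(HAOA c cinj) /ginj.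
  + by rewrite card_prod card_ffun !card_ord cX cY -expnD subnKC.
  + move=> r; rewrite xpair_eqE; congr (_ && _).
    apply/forallP/eqP => [H|H].
      by apply/ffunP => i; rewrite !ffunE; apply/eqP/H.
    by move=> i; have := congr1 (fun f : {ffun _ -> X} => f i) H; rewrite !ffunE => ->.
Qed.

Local Open Scope ring_scope.

Definition colA (v m : nat) (x : {ffun 'I_m.+1 -> 'Z_v}) (j : 'I_m.+2) : 'Z_v :=
  if (j < m.+1)%N then x (inord j) else - \sum_i x i.
Definition Lf (v m : nat) (x : {ffun 'I_m.+1 -> 'Z_v}) : {ffun 'I_m -> 'Z_v} :=
  [ffun i : 'I_m => x (inord i) + x (inord i.+1)].

Arguments colA {v m}.
Arguments Lf {v m}.

Lemma colAB v m (x y : {ffun 'I_m.+1 -> 'Z_v}) j :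
  colA (x - y) j = colA x j - colA y j.
Proof.
rewrite /colA; case: ifP => _; first by rewrite !ffunE.
have -> : \sum_i (x - y) i = \sum_i x i - \sum_i y i.
  by rewrite -sumrB; apply: eq_bigr => i _; rewrite !ffunE.
by rewrite opprD.
Qed.

Lemma LfB v m (x y : {ffun 'I_m.+1 -> 'Z_v}) : Lf (x - y) = Lf x - Lf y.
Proof. by apply/ffunP => i; rewrite !ffunE; ring. Qed.

Lemma sum_sign (R : ringType) n : \sum_(i < n) (-1 : R) ^+ i = (odd n)%:R.
Proof.
elim: n => [|n IH]; first by rewrite big_ord0.
rewrite big_ord_recr /= IH -signr_odd; case: (odd n) => /=.
  by rewrite expr1 subrr.
by rewrite expr0 add0r.
Qed.

Lemma ker_OA v m (c : 'I_m.+1 -> 'I_m.+2) : injective c ->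
  forall d : {ffun 'I_m.+1 -> 'Z_v}, (forall i, colA d (c i) = 0) -> d = 0.
Proof.
move=> cinj d Hd.
have Hcod : forall j, j \in codom c -> colA d j = 0 by move=> j /codomP [i ->].
have uniq2 : forall j1 j2, j1 \notin codom c -> j2 \notin codom c -> j1 = j2.
  move=> j1 j2 n1 n2; apply/eqP; apply/negPn/negP => ne.
  have : codom c \subset [predC pred2 j1 j2].
    apply/subsetP => j jc; rewrite !inE; apply/negP => /orP [] /eqP e; subst.
      by rewrite jc in n1.
    by rewrite jc in n2.
  move/subset_leq_card; rewrite card_codom // card_ord.
  have := cardC (pred2 j1 j2); rewrite card2 ne card_ord /= add2n => -[->]; by rewrite ltnn.
apply/ffunP => i; rewrite ffunE.
pose j : 'I_m.+2 := widen_ord (leqnSn _) i.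
have colj : colA d j = d i by rewrite /colA /= ltn_ord inord_val.
case: (boolP (j \in codom c)) => jc; first by rewrite -colj Hcod.
have oth : forall j', j' != j -> colA d j' = 0.
  move=> j' ne; apply: Hcod; apply/negPn/negP=> nj'.
  by rewrite (uniq2 _ _ nj' jc) eqxx in ne.
have hmax := oth ord_max.
rewrite /colA /= ltnn -val_eqE /= gtn_eqF // in hmax.
move/eqP: (hmax isT); rewrite oppr_eq0 (bigD1 i) //= big1 ?addr0 => [/eqP //|i' ne].
have := oth (widen_ord (leqnSn _) i').
rewrite /colA /= ltn_ord inord_val; apply.
by rewrite -val_eqE /= val_eqE.
Qed.

Lemma ker_AOA v m (j : 'I_m.+2) : ~~ odd m ->
  forall d : {ffun 'I_m.+1 -> 'Z_v}, colA d j = 0 -> Lf d = 0 -> d = 0.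
Proof.
move=> em d Hj HL.
have Hsign : forall n, (n <= m)%N -> d (inord n) = (-1)^+n * d (inord 0).
  elim=> [|n IH] Hn; first by rewrite expr0 mul1r.
  have := congr1 (fun f : {ffun 'I_m -> 'Z_v} => f (Ordinal Hn)) HL.
  rewrite !ffunE /= => /eqP; rewrite addr_eq0 => /eqP H.
  by rewrite exprS mulN1r mulNr -IH ?(ltnW Hn) // H opprK.
have d0 : d (inord 0) = 0.
  move: Hj; rewrite /colA; case: ifP => jlt.
    move=> H; rewrite Hsign in H; last by rewrite -ltnS.
    by rewrite -(signrMK j (d _)) H mulr0.
  rewrite (eq_bigr (fun i : 'I_m.+1 => (-1)^+i * d (inord 0))) => [|i _]; last first.
    rewrite -[i in d i]inord_val Hsign //; by rewrite -ltnS.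
  by rewrite -mulr_suml sum_sign /= em mul1r => /eqP; rewrite oppr_eq0 => /eqP.
apply/ffunP => i; rewrite !ffunE -[i]inord_val Hsign; first by rewrite d0 mulr0.
by rewrite -ltnS.
Qed.

Local Close Scope ring_scope.

Theorem theorem2p4 (v k : nat) :
  2 <= v -> 2 <= k -> ~~ odd k -> AOA_exists 1 (k - 1) k v.
Proof.
move=> v2; case: k => [|[|m]] // _ /= em; rewrite !negbK in em.
have e1 : (m.+2 - 1 = m.+1)%N by rewrite subn1.
rewrite e1.
have cZ : #|'Z_v| = v by rewrite card_ord Zp_cast.
apply: (@aoa_gen 'Z_v {ffun 'I_m -> 'Z_v} {ffun 'I_m.+1 -> 'Z_v} 1 m.+1 m.+2 v
          (@colA v m) (@Lf v m)) => //.
- by rewrite card_ffun cZ card_ord.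
- by rewrite card_ffun cZ card_ord subn1.
- move=> c cinj x y /= /ffunP H; apply/eqP; rewrite -subr_eq0; apply/eqP.
  apply: (@ker_OA v m c cinj) => i; rewrite colAB; apply/eqP; rewrite subr_eq0.
  by have := H i; rewrite !ffunE => ->.
- move=> c cinj x y /= [] /ffunP H HL; apply/eqP; rewrite -subr_eq0; apply/eqP.
  apply: (@ker_AOA v m (c ord0) em).
    by rewrite colAB; apply/eqP; rewrite subr_eq0; have := H ord0; rewrite !ffunE => ->.
  by rewrite LfB HL subrr.
Qed.
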